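(* If a graph $G$ has an $\operatorname{IR}(G)$-set that is not independent and the $\operatorname{IR}$-graph $H=G(\operatorname{IR})$ is connected, then $H$ has an induced $4$-cycle or $\operatorname{diam}(H)\geq 3$.
   Context: All graphs are finite and simple. For $G=(V,E)$, $D\subseteq V$, $v\in D$: $\operatorname{PN}(v,D)=N[v]-N[D-\{v\}]$ (closed neighbourhoods). $D$ is irredundant if $\operatorname{PN}(v,D)\neq\varnothing$ for all $v\in D$; $\operatorname{IR}(G)$ is the maximum size of an irredundant set; an $\operatorname{IR}(G)$-set is an irredundant set of that size. $G(\operatorname{IR})$ has the $\operatorname{IR}(G)$-sets as vertices, with $D\sim D'$ iff there exist $u\in D$, $v\in D'$ with $uv\in E(G)$ and $D'=(D-\{u\})\cup\{v\}$. *)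

(* Defs.v *)
(* A finite simple graph G = (T, e): T : finType, e : rel T
   symmetric and irreflexive. *)
From mathcomp Require Import all_boot all_order.
Set Implicit Arguments. Unset Strict Implicit. Unset Printing Implicit Defensive.

Section IRGraph.
Variables (T : finType) (e : rel T).

Definition cnbhd (v : T) : {set T} := [set w | (w == v) || e v w].
Definition cnbhd_set (S : {set T}) : {set T} := \bigcup_(x in S) cnbhd x.
Definition pn (v : T) (D : {set T}) : {set T} := cnbhd v :\: cnbhd_set (D :\ v).

Definition irredundant (D : {set T}) : bool := [forall v in D, pn v D != set0].

Definition IR : nat := \max_(D : {set T} | irredundant D) #|D|.

Definition IR_set (D : {set T}) : bool := irredundant D && (#|D| == IR).

Definition independent (D : {set T}) : bool :=
  [forall u in D, forall v in D, ~~ e u v].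

Definition IR_adj : rel {set T} := fun D D' =>
  [&& IR_set D, IR_set D' &
   [exists u in D, exists v in D', e u v && (D' == (D :\ u) :|: [set v])]].

Definition IR_connected : Prop :=
  forall D D', IR_set D -> IR_set D' -> connect IR_adj D D'.

Definition IR_walk_le (k : nat) (D D' : {set T}) : Prop :=
  exists p : seq {set T}, [/\ size p <= k, path IR_adj D p & last D p = D'].

(* diam(H) >= k : some two vertices of H are at distance >= k,
   i.e. not joined by any walk of length <= k-1 *)
Definition IR_diam_ge (k : nat) : Prop :=
  exists D D', [/\ IR_set D, IR_set D' & ~ IR_walk_le k.-1 D D'].

Definition IR_induced_C4 : Prop :=
  exists a b c d : {set T},
    [/\ uniq [:: a; b; c; d],
        [&& IR_adj a b, IR_adj b c, IR_adj c d & IR_adj d a] &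
        ~~ IR_adj a c && ~~ IR_adj b d].

End IRGraph.

(* Main.v *)
Require Import Defs.
From mathcomp Require Import all_boot all_order.
Set Implicit Arguments. Unset Strict Implicit. Unset Printing Implicit Defensive.

Lemma in_cn (T : finType) (e : rel T) v w : (w \in cnbhd e v) = (w == v) || e v w.
Proof. by rewrite /cnbhd inE. Qed.

Lemma pnP (T : finType) (e : rel T) v (D : {set T}) p :
  reflect (p \in cnbhd e v /\ forall y, y \in D -> y != v -> p \notin cnbhd e y)
          (p \in pn e v D).
Proof.
rewrite /pn in_setD; apply: (iffP andP) => [[np nv]|[nv np]]; split => //.
- move=> y yD yv; apply/negP => py; move/negP: np; apply; apply/bigcupP.
  by exists y => //; rewrite in_setD1 yv yD.
- apply/negP => /bigcupP [y]; rewrite in_setD1 => /andP[yv yD] py.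
  by move: (np y yD yv); rewrite py.
Qed.

Definition fpn (T : finType) (e : rel T) (D : {set T}) (x : T) :=
  odflt x [pick p in pn e x D].

Lemma fpn_pn (T : finType) (e : rel T) (D : {set T}) x :
  irredundant e D -> x \in D -> fpn e D x \in pn e x D.
Proof.
move=> /forallP /(_ x) /implyP Dirr xD; have /set0Pn [p pP] := Dirr xD.
rewrite /fpn; case: pickP => [q //|/(_ p)]; by rewrite pP.
Qed.

Lemma fpn_prop (T : finType) (e : rel T) (esym : symmetric e) (eirr : irreflexive e)
  (D : {set T}) x y :
  irredundant e D -> x \in D -> y \in D -> e x y ->
  [/\ e x (fpn e D x), fpn e D x \notin D &
      forall z, z \in D -> z != x -> ~~ e z (fpn e D x)].
Proof.
move=> Dirr xD yD exy; have /pnP [px pz] := fpn_pn Dirr xD.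
set p := fpn e D x in px pz *.
have yx : y != x by apply/eqP => yx; move: exy; rewrite yx eirr.
have px' : p != x.
  apply/eqP => pxe; move: (pz y yD yx); rewrite pxe in_cn esym exy orbT //.
have exp : e x p by move: px; rewrite in_cn (negbTE px').
have pD : p \notin D.
  apply/negP => pD; move: (pz p pD px'); by rewrite in_cn eqxx.
split => // z zD zx; move: (pz z zD zx); rewrite in_cn negb_or => /andP[_ ->] //.
Qed.

Lemma fpn_inj (T : finType) (e : rel T) (esym : symmetric e) (eirr : irreflexive e)
  (D : {set T}) x y x' y' :
  irredundant e D -> x \in D -> y \in D -> e x y ->
  x' \in D -> y' \in D -> e x' y' -> fpn e D x = fpn e D x' -> x = x'.
Proof.
move=> Dirr xD yD exy x'D y'D exy' fe; apply/eqP; apply/negPn/negP => xx'.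
have [_ _ H] := fpn_prop esym eirr Dirr xD yD exy.
have [e' _ _] := fpn_prop esym eirr Dirr x'D y'D exy'.
by move: (H x' x'D); rewrite eq_sym xx' fe e' => /(_ isT).
Qed.
Lemma Y_irr (T : finType) (e : rel T) (esym : symmetric e) (eirr : irreflexive e)
  (D Tt : {set T}) :
  irredundant e D ->
  (forall x, x \in Tt -> x \in D /\ exists2 y, y \in D & e x y) ->
  (forall z z', z \in D :\: Tt -> z' \in D :\: Tt -> ~~ e z z') ->
  (forall x, x \in Tt -> (forall z, z \in D :\: Tt -> ~~ e x z) \/
      (forall x', x' \in Tt -> x' != x -> ~~ e (fpn e D x) (fpn e D x'))) ->
  irredundant e ((D :\: Tt) :|: fpn e D @: Tt) /\
  #|(D :\: Tt) :|: fpn e D @: Tt| = #|D|.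
Proof.
move=> Dirr HT H2 H3.
have Fp x : x \in Tt -> [/\ e x (fpn e D x), fpn e D x \notin D &
      forall z, z \in D -> z != x -> ~~ e z (fpn e D x)].
  move=> /HT [xD [y yD exy]]. exact: (fpn_prop esym eirr Dirr xD yD exy).
have Finj : {in Tt &, injective (fpn e D)}.
  move=> x x' /HT [xD [y yD exy]] /HT [x'D [y' y'D exy']].
  exact: (fpn_inj esym eirr Dirr xD yD exy x'D y'D exy').
split.
  apply/forallP => w; apply/implyP => wY; apply/set0Pn.
  move: wY; rewrite in_setU => /orP [wDT | /imsetP [x xT ->]].
  - exists w; apply/pnP; split; first by rewrite in_cn eqxx.
    move=> y; rewrite in_setU => /orP [yDT | /imsetP [x xT ->]] yw.
      by rewrite in_cn negb_or eq_sym yw H2.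
    have [_ nfD H] := Fp x xT.
    move: wDT; rewrite in_setD => /andP [wT wD].
    rewrite in_cn negb_or esym H ?andbT //; last first.
      by apply/eqP => wx; move: wT; rewrite wx xT.
    by apply/eqP => wf; move: nfD; rewrite -wf wD.
  - have [ef nfD H] := Fp x xT.
    have xD : x \in D by have [] := HT x xT.
    case: (H3 x xT) => [Ha | Hb].
    + exists x; apply/pnP; split; first by rewrite in_cn esym ef orbT.
      move=> y; rewrite in_setU => /orP [yDT | /imsetP [x' x'T ->]] yx.
        rewrite in_cn negb_or esym Ha // ?andbT.
        by apply/eqP => xy; move: yDT; rewrite -xy in_setD xT.
      have [_ nfD' H'] := Fp x' x'T.
      have x'x : x' != x by apply/eqP => xe; move: yx; rewrite xe eqxx.
      rewrite in_cn negb_or esym H' ?andbT //; last by rewrite eq_sym.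
      by apply/eqP => xf; move: nfD'; rewrite -xf xD.
    + exists (fpn e D x); apply/pnP; split; first by rewrite in_cn eqxx.
      move=> y; rewrite in_setU => /orP [yDT | /imsetP [x' x'T ->]] yx.
        move: yDT; rewrite in_setD => /andP [yT yD].
        rewrite in_cn negb_or eq_sym yx H // .
        by apply/eqP => yxe; move: yT; rewrite yxe xT.
      have x'x : x' != x by apply/eqP => xe; move: yx; rewrite xe eqxx.
      by rewrite in_cn negb_or eq_sym yx esym Hb.
rewrite cardsU card_in_imset //.
have -> : (D :\: Tt) :&: (fpn e D @: Tt) = set0.
  apply/setP => z; rewrite !inE; apply/negP => /andP [/andP [_ zD] /imsetP [x xT zx]].
  by have [_ nfD _] := Fp x xT; move: nfD; rewrite -zx zD.
rewrite cards0 subn0.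
have TD : Tt \subset D by apply/subsetP => x /HT [].
by rewrite -(cardsID Tt D) (setIidPr TD) addnC.
Qed.

Lemma adjI (T : finType) (e : rel T) (A B : {set T}) a b :
  IR_set e A -> IR_set e B -> a \in A -> b \in B -> e a b ->
  B = A :\ a :|: [set b] -> IR_adj e A B.
Proof.
move=> HA HB aA bB eab HBe; rewrite /IR_adj HA HB /=.
apply/existsP; exists a; rewrite aA /=; apply/existsP; exists b.
by rewrite bB eab HBe eqxx.
Qed.

Lemma nadj (T : finType) (e : rel T) (A B : {set T}) x y :
  IR_adj e A B -> x \in A -> x \notin B -> y \in A -> y \notin B -> x = y.
Proof.
move=> /and3P [_ _ /existsP [a /andP [aA /existsP [b /andP [bB /andP [eab /eqP HB]]]]]].
move=> xA xB yA yB.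
have xa : x == a by apply/negPn/negP => xa; move: xB; rewrite HB !inE xa xA.
have ya : y == a by apply/negPn/negP => ya; move: yB; rewrite HB !inE ya yA.
by rewrite (eqP xa) (eqP ya).
Qed.

Lemma adj_card (T : finType) (e : rel T) (A B C : {set T}) :
  IR_adj e A B -> #|B :\: C| <= #|A :\: C| + 1.
Proof.
move=> /and3P [_ _ /existsP [a /andP [aA /existsP [b /andP [bB /andP [eab /eqP HB]]]]]].
have sub : B :\: C \subset b |: (A :\: C).
  apply/subsetP => z; rewrite HB !inE => /andP [zC /orP [/andP [_ zA]| zb]].
    by rewrite zC zA orbT.
  by rewrite zb.
apply: (leq_trans (subset_leq_card sub)).
by rewrite cardsU1 addnC leq_add2l leq_b1.
Qed.

Lemma walk_card (T : finType) (e : rel T) (C : {set T}) p :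
  forall A, path (IR_adj e) A p -> #|last A p :\: C| <= #|A :\: C| + size p.
Proof.
elim: p => [|B p IH] A /=; first by rewrite addn0.
move=> /andP [hAB hp]; apply: (leq_trans (IH B hp)).
by rewrite addnS -addn1 addnAC leq_add2r (adj_card _ hAB).
Qed.

Theorem corollary4p2 (T : finType) (e : rel T)
  (esym : symmetric e) (eirr : irreflexive e) :
  (exists D : {set T}, IR_set e D /\ ~~ independent e D) ->
  IR_connected e ->
  IR_induced_C4 e \/ IR_diam_ge e 3.
Proof.
move=> [D [DIR hind]] _.
have /andP [Dirr /eqP DIRc] := DIR.
have [u [v [uD vD euv]]] : exists u v, [/\ u \in D, v \in D & e u v].
  move: hind; rewrite /independent => /forallPn [u]; rewrite negb_imply.
  move=> /andP [uD /forallPn [v]]; rewrite negb_imply negbK => /andP [vD euv].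
  by exists u, v.
have [efu fuD Hu] := fpn_prop esym eirr Dirr uD vD euv.
have evu : e v u by rewrite esym.
have [efv fvD Hv] := fpn_prop esym eirr Dirr vD uD evu.
set f := fpn e D in efu fuD Hu efv fvD Hv.
have IRs : forall Y, irredundant e Y -> #|Y| = #|D| -> IR_set e Y.
  by move=> Y Yi Yc; rewrite /IR_set Yi Yc DIRc eqxx.
have uv : (u == v) = false by apply/negbTE/eqP => h; move: euv; rewrite h eirr.
case: (boolP [exists w in D, [&& w != u, w != v & [exists y in D, e w y]]]).
- case/existsP => w /and4P [wD wu wv /existsP [y /andP [yD ewy]]].
  set S := [set x in D | [exists y in D, e x y]].
  have HS : forall x, x \in S -> x \in D /\ exists2 y, y \in D & e x y.
    move=> x; rewrite inE => /andP [xD /existsP [z /andP [zD exz]]].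
    by split => //; exists z.
  have H2 : forall z z', z \in D :\: S -> z' \in D :\: S -> ~~ e z z'.
    move=> z z' /setDP [zD zS] /setDP [z'D _]; apply/negP => ezz'.
    move/negP: zS; apply; rewrite inE zD /=; apply/existsP; exists z'.
    by rewrite z'D.
  have H3 : forall x, x \in S -> (forall z, z \in D :\: S -> ~~ e x z) \/
      (forall x', x' \in S -> x' != x -> ~~ e (fpn e D x) (fpn e D x')).
    move=> x xS; left => z /setDP [zD zS]; apply/negP => exz.
    move/negP: zS; apply; rewrite inE zD /=; apply/existsP; exists x.
    by rewrite esym exz (HS x xS).1.
  have [Yirr Ycard] := Y_irr esym eirr Dirr HS H2 H3.
  set Y := (D :\: S) :|: fpn e D @: S in Yirr Ycard.
  right; exists D, Y; split => //; first exact: IRs.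
  move=> [p [sp pp lp]].
  have := walk_card D pp; rewrite lp setDv cards0 add0n => Hc.
  have sub : fpn e D @: S \subset Y :\: D.
    apply/subsetP => z /imsetP [x xS ->].
    have [xD [y' y'D exy']] := HS x xS.
    have [_ nfD _] := fpn_prop esym eirr Dirr xD y'D exy'.
    by rewrite in_setD nfD /= /Y in_setU imset_f // orbT.
  have Finj : {in S &, injective (fpn e D)}.
    move=> x x' /HS [xD [y1 y1D exy1]] /HS [x'D [y2 y2D exy2]].
    exact: (fpn_inj esym eirr Dirr xD y1D exy1 x'D y2D exy2).
  have sub2 : w |: [set u; v] \subset S.
    apply/subsetP => z; rewrite !inE => /or3P [] /eqP ->; rewrite ?uD ?vD ?wD /=;
      apply/existsP; [exists y; by rewrite yD | exists v; by rewrite vD | exists u; by rewrite uD].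
  have c3 : 3 <= #|w |: [set u; v]| by rewrite cardsU1 cards2 !inE negb_or wu wv uv.
  have := leq_trans c3 (subset_leq_card sub2).
  rewrite -(card_in_imset Finj) => c3'.
  have := leq_trans c3' (subset_leq_card sub).
  move=> c; have := leq_trans c (leq_trans Hc sp); by [].
- move=> hno.
  have only : forall x y, x \in D -> y \in D -> e x y -> x = u \/ x = v.
    move=> x y xD yD exy; move/existsPn: hno => /(_ x); rewrite xD /= => /negP H.
    case: (eqVneq x u) => [->|xu]; first by left.
    case: (eqVneq x v) => [->|xv]; first by right.
    exfalso; apply: H; rewrite xu xv /=; apply/existsP; exists y; by rewrite yD.
  have fuu : (f u == u) = false by apply/negbTE/eqP => h; move: fuD; rewrite h uD.
  have fuv : (f u == v) = false by apply/negbTE/eqP => h; move: fuD; rewrite h vD.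
  have fvu : (f v == u) = false by apply/negbTE/eqP => h; move: fvD; rewrite h uD.
  have fvv : (f v == v) = false by apply/negbTE/eqP => h; move: fvD; rewrite h vD.
  have fufv : (f u == f v) = false.
    by apply/negbTE/eqP => h; move: (Hv u uD); rewrite uv -h efu => /(_ isT).
  have ufu : (u == f u) = false by rewrite eq_sym.
  have vfu : (v == f u) = false by rewrite eq_sym.
  have ufv : (u == f v) = false by rewrite eq_sym.
  have vfv : (v == f v) = false by rewrite eq_sym.
  have fvfu : (f v == f u) = false by rewrite eq_sym.
  have vu : (v == u) = false by rewrite eq_sym.
  have fuD' : (f u \in D) = false by apply/negbTE.
  have fvD' : (f v \in D) = false by apply/negbTE.
  have Hsing : forall a b, a \in D -> b \in D -> e a b ->
     forall c, c \in [set a] -> c \in D /\ exists2 y, y \in D & e c y.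
    by move=> a b aD bD eab c; rewrite inE => /eqP ->; split => //; exists b.
  have H2s : forall a, (a == u) || (a == v) ->
      forall z z', z \in D :\: [set a] -> z' \in D :\: [set a] -> ~~ e z z'.
    move=> a ha z z' /setDP [zD za] /setDP [z'D z'a]; apply/negP => ezz'.
    have ez'z : e z' z by rewrite esym.
    have zz' : z != z' by apply/eqP => h; move: ezz'; rewrite h eirr.
    move: za z'a; rewrite !inE => za z'a.
    case/orP: ha => /eqP ha; subst a;
    case: (only z z' zD z'D ezz') => hz; case: (only z' z z'D zD ez'z) => hz';
      subst; by rewrite ?eqxx in za z'a zz'.
  have H3s : forall a, forall x, x \in [set a] -> (forall z, z \in D :\: [set a] -> ~~ e x z) \/
      (forall x', x' \in [set a] -> x' != x -> ~~ e (fpn e D x) (fpn e D x')).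
    move=> a x; rewrite inE => /eqP ->; right => x'; rewrite inE => /eqP ->.
    by rewrite eqxx.
  have hu : (u == u) || (u == v) by rewrite eqxx.
  have hv : (v == u) || (v == v) by rewrite eqxx orbT.
  have [Duirr Ducard] := Y_irr esym eirr Dirr (Hsing u v uD vD euv) (H2s u hu) (H3s u).
  have [Dvirr Dvcard] := Y_irr esym eirr Dirr (Hsing v u vD uD evu) (H2s v hv) (H3s v).
  rewrite imset_set1 in Duirr Ducard; rewrite imset_set1 in Dvirr Dvcard.
  have HSuv : forall x, x \in [set u; v] -> x \in D /\ exists2 y, y \in D & e x y.
    by move=> x; rewrite !inE => /orP [] /eqP ->; split => //; [exists v | exists u].
  have H2uv : forall z z', z \in D :\: [set u; v] -> z' \in D :\: [set u; v] -> ~~ e z z'.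
    move=> z z' /setDP [zD zuv] /setDP [z'D _]; apply/negP => ezz'.
    by move: zuv; rewrite !inE; case: (only z z' zD z'D ezz') => ->; rewrite eqxx ?orbT.
  have H3uv : forall x, x \in [set u; v] -> (forall z, z \in D :\: [set u; v] -> ~~ e x z) \/
      (forall x', x' \in [set u; v] -> x' != x -> ~~ e (fpn e D x) (fpn e D x')).
    move=> x xuv; left => z /setDP [zD zuv]; apply/negP => exz.
    have ezx : e z x by rewrite esym.
    have [xD _] := HSuv x xuv.
    by move: zuv; rewrite !inE; case: (only z x zD xD ezx) => ->; rewrite eqxx ?orbT.
  have [Xirr Xcard] := Y_irr esym eirr Dirr HSuv H2uv H3uv.
  rewrite imsetU1 imset_set1 in Xirr Xcard.
  set Du := D :\ u :|: [set f u] in Duirr Ducard.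
  set Dv := D :\ v :|: [set f v] in Dvirr Dvcard.
  set X := D :\: [set u; v] :|: [set f u; f v] in Xirr Xcard.
  have DuIR := IRs _ Duirr Ducard.
  have DvIR := IRs _ Dvirr Dvcard.
  have XIR := IRs _ Xirr Xcard.
  have uDu : u \notin Du by rewrite /Du /Dv /X ?inE ?eqxx ?uv ?vu ?fuu ?fuv ?fvu ?fvv ?fufv ?fvfu ?ufu ?vfu ?ufv ?vfv ?uD ?vD ?fuD' ?fvD' /= ?orbT ?andbT ?andbF ?orbF.
  have uX : u \notin X by rewrite /Du /Dv /X ?inE ?eqxx ?uv ?vu ?fuu ?fuv ?fvu ?fvv ?fufv ?fvfu ?ufu ?vfu ?ufv ?vfv ?uD ?vD ?fuD' ?fvD' /= ?orbT ?andbT ?andbF ?orbF.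
  have vDv : v \notin Dv by rewrite /Du /Dv /X ?inE ?eqxx ?uv ?vu ?fuu ?fuv ?fvu ?fvv ?fufv ?fvfu ?ufu ?vfu ?ufv ?vfv ?uD ?vD ?fuD' ?fvD' /= ?orbT ?andbT ?andbF ?orbF.
  have vX : v \notin X by rewrite /Du /Dv /X ?inE ?eqxx ?uv ?vu ?fuu ?fuv ?fvu ?fvv ?fufv ?fvfu ?ufu ?vfu ?ufv ?vfv ?uD ?vD ?fuD' ?fvD' /= ?orbT ?andbT ?andbF ?orbF.
  have vDu : v \in Du by rewrite /Du /Dv /X ?inE ?eqxx ?uv ?vu ?fuu ?fuv ?fvu ?fvv ?fufv ?fvfu ?ufu ?vfu ?ufv ?vfv ?uD ?vD ?fuD' ?fvD' /= ?orbT ?andbT ?andbF ?orbF.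
  have uDv : u \in Dv by rewrite /Du /Dv /X ?inE ?eqxx ?uv ?vu ?fuu ?fuv ?fvu ?fvv ?fufv ?fvfu ?ufu ?vfu ?ufv ?vfv ?uD ?vD ?fuD' ?fvD' /= ?orbT ?andbT ?andbF ?orbF.
  have fuDu : f u \in Du by rewrite /Du /Dv /X ?inE ?eqxx ?uv ?vu ?fuu ?fuv ?fvu ?fvv ?fufv ?fvfu ?ufu ?vfu ?ufv ?vfv ?uD ?vD ?fuD' ?fvD' /= ?orbT ?andbT ?andbF ?orbF.
  have fuDv : f u \notin Dv by rewrite /Du /Dv /X ?inE ?eqxx ?uv ?vu ?fuu ?fuv ?fvu ?fvv ?fufv ?fvfu ?ufu ?vfu ?ufv ?vfv ?uD ?vD ?fuD' ?fvD' /= ?orbT ?andbT ?andbF ?orbF.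
  have fuX : f u \in X by rewrite /Du /Dv /X ?inE ?eqxx ?uv ?vu ?fuu ?fuv ?fvu ?fvv ?fufv ?fvfu ?ufu ?vfu ?ufv ?vfv ?uD ?vD ?fuD' ?fvD' /= ?orbT ?andbT ?andbF ?orbF.
  have fvX : f v \in X by rewrite /Du /Dv /X ?inE ?eqxx ?uv ?vu ?fuu ?fuv ?fvu ?fvv ?fufv ?fvfu ?ufu ?vfu ?ufv ?vfv ?uD ?vD ?fuD' ?fvD' /= ?orbT ?andbT ?andbF ?orbF.
  have fvDv : f v \in Dv by rewrite /Du /Dv /X ?inE ?eqxx ?uv ?vu ?fuu ?fuv ?fvu ?fvv ?fufv ?fvfu ?ufu ?vfu ?ufv ?vfv ?uD ?vD ?fuD' ?fvD' /= ?orbT ?andbT ?andbF ?orbF.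
  have neq : forall (A B : {set T}) x, x \in A -> x \notin B -> (A == B) = false.
    by move=> A B x xA xB; apply/negbTE/eqP => h; move: xB; rewrite -h xA.
  left; exists D, Du, X, Dv; split.
  - rewrite /= !inE !negb_or (neq _ _ u) // (neq _ _ u) // (neq _ _ v) //.
    by rewrite (neq _ _ v) // (neq _ _ (f u)) // (neq _ _ (f u)).
  - apply/and4P; split.
    + exact: (adjI DIR DuIR uD fuDu efu).
    + apply: (adjI DuIR XIR vDu fvX efv).
    apply/setP => x; rewrite /Du /Dv /X ?inE.
    case: (eqVneq x (u)) => [->|xu]; first by rewrite /Du /Dv /X ?inE ?eqxx ?uv ?vu ?fuu ?fuv ?fvu ?fvv ?fufv ?fvfu ?ufu ?vfu ?ufv ?vfv ?uD ?vD ?fuD' ?fvD' /= ?orbT ?andbT ?andbF ?orbF.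
    case: (eqVneq x (v)) => [->|xv]; first by rewrite /Du /Dv /X ?inE ?eqxx ?uv ?vu ?fuu ?fuv ?fvu ?fvv ?fufv ?fvfu ?ufu ?vfu ?ufv ?vfv ?uD ?vD ?fuD' ?fvD' /= ?orbT ?andbT ?andbF ?orbF.
    case: (eqVneq x (f u)) => [->|xfu]; first by rewrite /Du /Dv /X ?inE ?eqxx ?uv ?vu ?fuu ?fuv ?fvu ?fvv ?fufv ?fvfu ?ufu ?vfu ?ufv ?vfv ?uD ?vD ?fuD' ?fvD' /= ?orbT ?andbT ?andbF ?orbF.
    case: (eqVneq x (f v)) => [->|xfv]; first by rewrite /Du /Dv /X ?inE ?eqxx ?uv ?vu ?fuu ?fuv ?fvu ?fvv ?fufv ?fvfu ?ufu ?vfu ?ufv ?vfv ?uD ?vD ?fuD' ?fvD' /= ?orbT ?andbT ?andbF ?orbF.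
    rewrite /=.
    by case: (x \in D); rewrite ?andbT ?andbF ?orbF.

    + apply: (adjI XIR DvIR fuX uDv); first by rewrite esym.
    apply/setP => x; rewrite /Du /Dv /X ?inE.
    case: (eqVneq x (u)) => [->|xu]; first by rewrite /Du /Dv /X ?inE ?eqxx ?uv ?vu ?fuu ?fuv ?fvu ?fvv ?fufv ?fvfu ?ufu ?vfu ?ufv ?vfv ?uD ?vD ?fuD' ?fvD' /= ?orbT ?andbT ?andbF ?orbF.
    case: (eqVneq x (v)) => [->|xv]; first by rewrite /Du /Dv /X ?inE ?eqxx ?uv ?vu ?fuu ?fuv ?fvu ?fvv ?fufv ?fvfu ?ufu ?vfu ?ufv ?vfv ?uD ?vD ?fuD' ?fvD' /= ?orbT ?andbT ?andbF ?orbF.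
    case: (eqVneq x (f u)) => [->|xfu]; first by rewrite /Du /Dv /X ?inE ?eqxx ?uv ?vu ?fuu ?fuv ?fvu ?fvv ?fufv ?fvfu ?ufu ?vfu ?ufv ?vfv ?uD ?vD ?fuD' ?fvD' /= ?orbT ?andbT ?andbF ?orbF.
    case: (eqVneq x (f v)) => [->|xfv]; first by rewrite /Du /Dv /X ?inE ?eqxx ?uv ?vu ?fuu ?fuv ?fvu ?fvv ?fufv ?fvfu ?ufu ?vfu ?ufv ?vfv ?uD ?vD ?fuD' ?fvD' /= ?orbT ?andbT ?andbF ?orbF.
    rewrite /=.
    by case: (x \in D); rewrite ?andbT ?andbF ?orbF.

    + apply: (adjI DvIR DIR fvDv vD); first by rewrite esym.
    apply/setP => x; rewrite /Du /Dv /X ?inE.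
    case: (eqVneq x (u)) => [->|xu]; first by rewrite /Du /Dv /X ?inE ?eqxx ?uv ?vu ?fuu ?fuv ?fvu ?fvv ?fufv ?fvfu ?ufu ?vfu ?ufv ?vfv ?uD ?vD ?fuD' ?fvD' /= ?orbT ?andbT ?andbF ?orbF.
    case: (eqVneq x (v)) => [->|xv]; first by rewrite /Du /Dv /X ?inE ?eqxx ?uv ?vu ?fuu ?fuv ?fvu ?fvv ?fufv ?fvfu ?ufu ?vfu ?ufv ?vfv ?uD ?vD ?fuD' ?fvD' /= ?orbT ?andbT ?andbF ?orbF.
    case: (eqVneq x (f u)) => [->|xfu]; first by rewrite /Du /Dv /X ?inE ?eqxx ?uv ?vu ?fuu ?fuv ?fvu ?fvv ?fufv ?fvfu ?ufu ?vfu ?ufv ?vfv ?uD ?vD ?fuD' ?fvD' /= ?orbT ?andbT ?andbF ?orbF.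
    case: (eqVneq x (f v)) => [->|xfv]; first by rewrite /Du /Dv /X ?inE ?eqxx ?uv ?vu ?fuu ?fuv ?fvu ?fvv ?fufv ?fvfu ?ufu ?vfu ?ufv ?vfv ?uD ?vD ?fuD' ?fvD' /= ?orbT ?andbT ?andbF ?orbF.
    rewrite /=.
    by case: (x \in D); rewrite ?andbT ?andbF ?orbF.

  - apply/andP; split; apply/negP => h.
    + by have := nadj h uD uX vD vX => /eqP; rewrite uv.
    + by have := nadj h fuDu fuDv vDu vDv => /eqP; rewrite fuv.
Qed.
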